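(* Let $\alpha\in[0,1]$ be irrational with continued fraction denominators $(q_n)_{n\ge1}$. There exists a set $S_\alpha\subset[0,1]$ of full Lebesgue measure such that for every $\beta\in S_\alpha$, with continued fraction denominators $(q'_n)_{n\ge1}$, there exists a sequence $(n_j)_{j\ge1}$ such that either $\lim_{j\to\infty}M_{n_j}=\infty$ or $\lim_{j\to\infty}N_{n_j}=\infty$, where for each $k$, $\sigma(k)$ is the index with $q'_{\sigma(k)}<q_k<q'_{\sigma(k)+1}$, $\eta(k)$ is the index with $q_{\eta(k)}<q'_k<q_{\eta(k)+1}$, and $$M_k=\max_{r:\,q'_{\sigma(k)}<q_r<q'_{\sigma(k)+1}}\min\Big\{\frac{q_r}{q'_{\sigma(k)}},\frac{q'_{\sigma(k)+1}}{q_r}\Big\},\qquad N_k=\max_{r:\,q_{\eta(k)}<q'_r<q_{\eta(k)+1}}\min\Big\{\frac{q'_r}{q_{\eta(k)}},\frac{q_{\eta(k)+1}}{q'_r}\Big\}.$$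
   Context: Continued fraction denominators of an irrational $\gamma=[c_0;c_1,\dots]$: $q_0=1$, $q_1=c_1$, $q_n=c_nq_{n-1}+q_{n-2}$. *)

(* Defs.v *)
From HB Require Import structures.
From mathcomp Require Import all_boot all_order all_algebra.
From mathcomp Require Import all_classical all_reals all_analysis.
Set Implicit Arguments. Unset Strict Implicit. Unset Printing Implicit Defensive.
Import Order.TTheory GRing.Theory Num.Theory.
Import numFieldNormedType.Exports.
Local Open Scope classical_set_scope.
Local Open Scope ring_scope.

Section CF.
Variable R : realType.

Definition frac (x : R) : R := x - (Num.floor x)%:~R.

Fixpoint cf_rem (x : R) (n : nat) : R :=
  match n with
  | 0 => x
  | n.+1 => (frac (cf_rem x n))^-1
  end.

(* partial quotients c_n = floor x_n, so x = [c_0; c_1, c_2, ...] *)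
Definition cf_digit (x : R) (n : nat) : R := (Num.floor (cf_rem x n))%:~R.

(* (q_n, q_{n+1}) with q_0 = 1, q_1 = c_1, q_n = c_n q_{n-1} + q_{n-2} *)
Fixpoint cf_qpair (x : R) (n : nat) : R * R :=
  match n with
  | 0 => (1, cf_digit x 1)
  | n.+1 => let p := cf_qpair x n in (p.2, cf_digit x n.+2 * p.2 + p.1)
  end.

Definition cf_q (x : R) (n : nat) : R := (cf_qpair x n).1.

Definition between_idx (q q' : nat -> R) (k s : nat) : Prop :=
  (1 <= s)%N /\ q' s < q k < q' s.+1.

(* M-type quantity for the gap (q'_s, q'_{s+1}):
   max over r >= 1 with q'_s < q_r < q'_{s+1} of min(q_r/q'_s, q'_{s+1}/q_r).
   (The index set is finite, so sup is the max.) *)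
Definition gap_ratio (q q' : nat -> R) (s : nat) : R :=
  sup [set Num.min (q r / q' s) (q' s.+1 / q r) |
        r in [set r : nat | (1 <= r)%N /\ q' s < q r < q' s.+1]].

End CF.

(* Main.v *)
Require Import Defs.
From HB Require Import structures.
From mathcomp Require Import all_boot all_order all_algebra.
From mathcomp Require Import all_classical all_reals all_analysis.
From mathcomp Require Import ring lra.
Import Order.TTheory GRing.Theory Num.Theory.
Import numFieldNormedType.Exports.
Local Open Scope classical_set_scope.
Local Open Scope ring_scope.


Section Basics.
Variable R : realType.
Implicit Types x y : R.
Local Notation frac := (@Defs.frac R).

Lemma irrN0 x : irrational x -> x != 0.
Proof. by move=> ix; apply/eqP => x0; apply: ix; exists 0 => //; rewrite rmorph0. Qed.

Lemma irrBint x (z : int) : irrational x -> irrational (x - z%:~R).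
Proof.
move=> ix [q _ hq]; apply: ix; exists (q + z%:~R) => //.
by rewrite rmorphD /= ratr_int hq subrK.
Qed.

Lemma irrV x : irrational x -> irrational x^-1.
Proof.
move=> ix [q _ hq]; apply: ix; exists q^-1 => //.
by rewrite fmorphV /= hq invrK.
Qed.

Lemma frac_irr x : irrational x -> 0 < frac x < 1.
Proof.
move=> ix; have := floor_itv x; rewrite /frac intrD => /andP[h1 h2].
have fx0 : frac x != 0 by apply: irrN0; apply: irrBint.
rewrite /frac in fx0; rewrite lt_neqAle eq_sym fx0 subr_ge0 h1 /=.
by rewrite ltrBlDl.
Qed.

Lemma rem_irr x n : irrational x -> irrational (cf_rem x n).
Proof. by move=> ix; elim: n => //= n IH; apply/irrV/irrBint. Qed.

Lemma rem_gt1 x n : irrational x -> 1 < cf_rem x n.+1.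
Proof.
move=> ix /=; have /andP[h1 h2] := frac_irr _ (rem_irr x n ix).
by rewrite invf_gt1.
Qed.

Lemma rem_rec x n : irrational x ->
  cf_rem x n = cf_digit x n + (cf_rem x n.+1)^-1.
Proof. by move=> ix /=; rewrite invrK /frac /cf_digit addrC subrK. Qed.

Lemma digit_ge1 x n : irrational x -> 1 <= cf_digit x n.+1.
Proof.
move=> ix; rewrite /cf_digit -[1](@mulr1z R) ler_int floor_ge_int.
by rewrite mulr1z ltW // rem_gt1.
Qed.

Lemma digit_le x n : cf_digit x n <= cf_rem x n.
Proof. exact: floor_le. Qed.

Lemma digit_nat x n : irrational x -> exists k : nat, cf_digit x n.+1 = k%:R.
Proof.
move=> ix; have h := digit_ge1 x n ix; rewrite /cf_digit in h *.
have : 0 <= Num.floor (cf_rem x n.+1).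
  by rewrite floor_ge0; apply: le_trans (floor_le _); apply: le_trans h.
case: (Num.floor _) => // k _; by exists k.
Qed.

End Basics.

Set Implicit Arguments. Unset Strict Implicit. Unset Printing Implicit Defensive.


Section States.
Variable R : realType.
Implicit Types x y : R.

Record st := St { sP : R; sP' : R; sQ : R; sQ' : R }.

Definition nxt (a : R) (s : st) :=
  St (a * sP s + sP' s) (sP s) (a * sQ s + sQ' s) (sQ s).
Definition st0 := St 0 1 1 0.

Fixpoint cvst x n := match n with
  | 0 => st0 | k.+1 => nxt (cf_digit x k.+1) (cvst x k) end.

Definition hm s t := (sP s + t * sP' s) / (sQ s + t * sQ' s).

Definition good s := 1 <= sQ s /\ 0 <= sQ' s <= sQ s /\
  `|sP' s * sQ s - sP s * sQ' s| = 1.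

Lemma good0 : good st0.
Proof. rewrite /good /=; split; first by [].
split; first by rewrite lexx ler01.
by rewrite !mul1r mul0r subr0 normr1. Qed.

Lemma good_nxt a s : 1 <= a -> good s -> good (nxt a s).
Proof.
move=> a1 [q1 [/andP[q'0 q'q] d]]; rewrite /good /=.
have h : sQ s <= a * sQ s + sQ' s by nra.
split; first by lra.
split; first by apply/andP; split; lra.
rewrite -d -normrN; congr `|_|; ring.
Qed.

Lemma cst_good x n : irrational x -> good (cvst x n).
Proof. by move=> ix; elim: n => [|n IH] /=; [exact: good0|apply: good_nxt => //; exact: (digit_ge1 _ _ _ ix)]. Qed.

Lemma cst_qpair x n : cf_qpair x n = (sQ (cvst x n), sQ (cvst x n.+1)).
Proof.
elim: n => [|n IH] /=; first by rewrite mulr1 addr0.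
by rewrite IH.
Qed.

Lemma cst_q x n : cf_q x n = sQ (cvst x n).
Proof. by rewrite /cf_q cst_qpair. Qed.

Lemma cstQ' x n : sQ' (cvst x n.+1) = sQ (cvst x n).
Proof. by []. Qed.

Lemma cst_repr x n : irrational x -> 0 < x < 1 ->
  x = hm (cvst x n) (cf_rem x n.+1)^-1.
Proof.
move=> ix /andP[x0 x1]; elim: n => [|n IH].
  rewrite /hm /= invrK /Defs.frac.
  have -> : Num.floor x = 0 by apply/eqP; rewrite floor_eq /= ltW //= add0r.
  by rewrite subr0 mulr1 mulr0 addr0 add0r divr1.
rewrite {1}IH (rem_rec _ x n.+1 ix); set a := cf_digit x n.+1.
set t := (cf_rem x n.+2)^-1.
have ha : 1 <= a by exact: (digit_ge1 _ _ _ ix).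
have ht : 0 < t by rewrite invr_gt0; apply: lt_trans (rem_gt1 _ _ _ ix).
have [q1 [/andP[q'0 q'q] _]] := cst_good n ix.
rewrite /hm /= -/a.
move: q1 q'0 q'q.
set P := sP (cvst x n); set P' := sP' (cvst x n); set Q := sQ (cvst x n); set Q' := sQ' (cvst x n).
move=> q1 q'0 q'q.
have h1 : a + t != 0 by apply/eqP; lra.
have h2 : Q + (a + t)^-1 * Q' != 0.
  apply/eqP => h; have : 0 < Q + (a + t)^-1 * Q'.
    have : 0 <= (a + t)^-1 * Q' by apply: mulr_ge0 => //; rewrite invr_ge0; lra.
    move=> ?; lra.
  by rewrite h ltxx.
have aQ : 0 < a * Q by apply: mulr_gt0; lra.
have tQ : 0 < t * Q by apply: mulr_gt0; lra.
have h3 : a * Q + Q' + t * Q != 0 by apply/eqP => h; lra.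
field.
by apply/andP; split; [exact: h3 | exact: h1].
Qed.
End States.

Section Geo.
Variable R : realType.
Implicit Types x y : R.

Definition rho (s : st R) (sg : R) := sg / (sQ s * (sQ s + sg * sQ' s)).

Lemma hm_close (s : st R) t sg : good s -> 0 <= t <= sg ->
  `|hm s t - sP s / sQ s| <= rho s sg.
Proof.
move=> [q1 [/andP[q'0 q'q] d]] /andP[t0 tsg].
rewrite /hm /rho.
have Q0 : sQ s != 0 by apply/eqP; lra.
have D0 : sQ s + t * sQ' s != 0 by apply/eqP; nra.
have E : (sP s + t * sP' s) / (sQ s + t * sQ' s) - sP s / sQ s =
   t * (sP' s * sQ s - sP s * sQ' s) / (sQ s * (sQ s + t * sQ' s)).
  by field; rewrite Q0 D0.
rewrite E !normrM d mulr1 (ger0_norm t0) ger0_norm; last first.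
  by rewrite invr_ge0 mulr_ge0 //; nra.
rewrite ler_pdivrMr; last by apply: mulr_gt0; nra.
rewrite mulrAC ler_pdivlMr; last by apply: mulr_gt0; nra.
have : 0 <= sQ s by lra.
nra.
Qed.

Lemma cst_mono x n : irrational x -> sQ (cvst x n) <= sQ (cvst x n.+1).
Proof.
move=> ix /=; have [q1 [/andP[q'0 q'q] _]] := cst_good n ix.
have := digit_ge1 _ x n ix; nra.
Qed.

Lemma cst_mono_le x i j : irrational x -> (i <= j)%N -> sQ (cvst x i) <= sQ (cvst x j).
Proof.
move=> ix /subnK <-; elim: (j - i)%N => [|d IH] //; rewrite addSn.
exact: le_trans IH (cst_mono _ ix).
Qed.

Lemma cst_ge_digit x n : irrational x -> cf_digit x n.+1 * sQ (cvst x n) <= sQ (cvst x n.+1).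
Proof.
move=> ix /=; have [q1 [/andP[q'0 q'q] _]] := cst_good n ix; lra.
Qed.

Lemma cst_geq x n : irrational x -> n%:R <= sQ (cvst x n).
Proof.
move=> ix; suff : n%:R <= sQ (cvst x n) /\ n.+1%:R <= sQ (cvst x n.+1) by case.
elim: n => [|n [IH1 IH2]].
  split; first by have [] := cst_good 0 ix; lra.
  have := cst_ge_digit 0 ix; have := digit_ge1 _ x 0 ix.
  rewrite /= !mulr1 !addr0 => ? ?; lra.
split => //.
have := cst_ge_digit n.+1 ix; have := digit_ge1 _ x n.+1 ix.
rewrite -!natr1 => ? ?.
have E : sQ (cvst x n.+2) = cf_digit x n.+2 * sQ (cvst x n.+1) + sQ (cvst x n) by [].
have [q1 _] := cst_good n ix.
have [q1' _] := cst_good n.+1 ix.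
have : sQ (cvst x n.+1) <= cf_digit x n.+2 * sQ (cvst x n.+1) by nra.
lra.
Qed.

Lemma cst_le_ratio x n (K : R) : irrational x -> cf_digit x n.+1 <= K ->
  sQ (cvst x n.+1) <= (K + 1) * sQ (cvst x n).
Proof.
move=> ix hK /=; have [q1 [/andP[q'0 q'q] _]] := cst_good n ix; nra.
Qed.

End Geo.


Section Meas.
Variable R : realType.
Local Notation mu := (@lebesgue_measure R).

Definition Seg (c r : R) : set R := `[c - r, c + r]%classic.

Lemma Seg_meas c r : measurable (Seg c r).
Proof. exact: measurable_itv. Qed.

Lemma Seg_mu c r : 0 <= r -> mu (Seg c r) = (2 * r)%:E.
Proof.
move=> r0; rewrite /Seg lebesgue_measure_itv /=.
case: ifPn; rewrite lte_fin => h.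
  by rewrite -EFinB; congr (_%:E); ring.
have -> : r = 0 by apply/eqP; rewrite eq_le r0 andbT; move: h; rewrite -leNgt; lra.
by rewrite mulr0.
Qed.

Lemma Seg_in c r y : `|y - c| <= r -> Seg c r y.
Proof.
rewrite /Seg /= in_itv /= => h.
by move: h; rewrite ler_norml => /andP[h1 h2]; apply/andP; split; lra.
Qed.

Lemma muU2 (A B : set R) : measurable A -> measurable B ->
  (mu (A `|` B) <= mu A + mu B)%E.
Proof. exact: (measureU2 mu). Qed.

Lemma in_bigU (s : seq nat) (F : nat -> set R) i y :
  i \in s -> F i y -> (\big[setU/set0]_(j <- s) F j) y.
Proof.
elim: s => // a s IH; rewrite in_cons big_cons => /orP[/eqP <- h|h h']; first by left.
by right; apply: IH.
Qed.

Lemma bigU_meas (s : seq nat) (F : nat -> set R) :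
  (forall i, i \in s -> measurable (F i)) -> measurable (\big[setU/set0]_(j <- s) F j).
Proof.
elim: s => [|a s IH] h; first by rewrite big_nil.
rewrite big_cons; apply: measurableU; first by apply: h; rewrite mem_head.
by apply: IH => i hi; apply: h; rewrite in_cons hi orbT.
Qed.

Lemma mu_bigU (s : seq nat) (F : nat -> set R) (b : nat -> R) :
  (forall i, i \in s -> measurable (F i)) ->
  (forall i, i \in s -> (mu (F i) <= (b i)%:E)%E) ->
  (mu (\big[setU/set0]_(j <- s) F j) <= (\sum_(j <- s) b j)%:E)%E.
Proof.
elim: s => [|a s IH] hm hb; first by rewrite !big_nil measure0.
rewrite !big_cons; apply: le_trans (measureU2 _ _ _) _.
- by apply: hm; rewrite mem_head.
- by apply: bigU_meas => i hi; apply: hm; rewrite in_cons hi orbT.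
rewrite EFinD; apply: leeD; first by apply: hb; rewrite mem_head.
by apply: IH => i hi; [apply: hm|apply: hb]; rewrite in_cons hi orbT.
Qed.

Lemma tele (Q Q' : R) m : 0 < Q -> 0 <= Q' ->
  \sum_(a <- index_iota 1 m.+1) ((a%:R * Q + Q') * ((a%:R * Q + Q') + Q))^-1
  = (Q * (Q + Q'))^-1 - (Q * (m.+1%:R * Q + Q'))^-1.
Proof.
move=> Q0 Q'0; elim: m => [|m IH].
  by rewrite /index_iota subnn big_nil mul1r subrr.
rewrite big_nat_recr //= IH -!natr1.
have hm : 0 <= m%:R :> R by [].
have h1 : Q != 0 by apply/eqP; lra.
have h2 : Q + Q' != 0 by apply/eqP; lra.
have h3 : (m%:R + 1) * Q + Q' != 0 by apply/eqP; nra.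
have h4 : (m%:R + 1 + 1) * Q + Q' != 0 by apply/eqP; nra.
have h5 : (m%:R + 1) * Q + Q' + Q != 0 by apply/eqP; nra.
by field; rewrite h1 h2 h3 h4.
Qed.

Lemma teleB (Q Q' X : R) m : 1 <= Q -> 0 <= Q' <= Q -> Q < X ->
  \sum_(a <- index_iota 1 m.+1)
     (if a%:R * Q + Q' < X then ((a%:R * Q + Q') * ((a%:R * Q + Q') + Q))^-1 else 0)
  <= (Q * (Q + Q'))^-1 -
     (if m%:R * Q + Q' < X then (Q * (m.+1%:R * Q + Q'))^-1 else (2 * X * Q)^-1).
Proof.
move=> Q1 /andP[Q'0 Q'Q] QX; elim: m => [|m IH].
  rewrite /index_iota subnn big_nil mul0r add0r.
  case: ifPn => h; first by rewrite mul1r subrr.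
  by move: h; rewrite -leNgt => h; lra.
rewrite big_nat_recr //=.
have hm : 0 <= m%:R :> R by [].
case h1 : (m.+1%:R * Q + Q' < X).
- have h2 : m%:R * Q + Q' < X.
    by apply: le_lt_trans h1; rewrite -natr1; nra.
  rewrite h2 in IH.
  move: h1 IH; rewrite -!natr1 => h1 IH.
  have E : ((m%:R + 1) * Q + Q') * ((m%:R + 1) * Q + Q' + Q) =
           ((m%:R + 1) * Q + Q') * ((m%:R + 1 + 1) * Q + Q') by ring.
  rewrite E.
  have hA : 0 < (m%:R + 1) * Q + Q' by nra.
  have hB : 0 < (m%:R + 1 + 1) * Q + Q' by nra.
  have -> : (((m%:R + 1) * Q + Q') * ((m%:R + 1 + 1) * Q + Q'))^-1 =
     (Q * ((m%:R + 1) * Q + Q'))^-1 - (Q * ((m%:R + 1 + 1) * Q + Q'))^-1.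
    by field; apply/and3P; split; apply/eqP; nra.
  lra.
- rewrite addr0; apply: le_trans IH _.
  case h3 : (m%:R * Q + Q' < X); last by lra.
  rewrite lerD2l lerN2 lef_pV2 ?posrE.
  + move: h1 => /negbT; rewrite -leNgt -natr1; nra.
  + by apply: mulr_gt0; nra.
  + by apply: mulr_gt0; nra.
Qed.

Fixpoint CovA (L : nat) (n : nat) (s : st R) : set R :=
  match n with
  | 0 => Seg (sP s / sQ s) (rho s 1)
  | k.+1 => \big[setU/set0]_(a <- index_iota 1 L) CovA L k (nxt a%:R s)
  end.

Lemma CovA_meas L n s : measurable (CovA L n s).
Proof.
elim: n s => [|n IH] s /=; first exact: Seg_meas.
by apply: bigU_meas.
Qed.

Lemma CovA_mu L n s : (1 <= L)%N -> good s ->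
  (mu (CovA L n s) <= (2 * (1 - L%:R^-1) ^+ n / (sQ s * (sQ s + sQ' s)))%:E)%E.
Proof.
move=> L1; elim: n s => [|n IH] s [q1 [/andP[q'0 q'q] d]] /=.
  rewrite Seg_mu; last by rewrite /rho divr_ge0 // mulr_ge0; lra.
  by rewrite /rho expr0 mulr1 !mul1r.
apply: le_trans.
  apply: (@mu_bigU _ _ (fun a : nat => 2 * (1 - L%:R^-1) ^+ n /
            (sQ (nxt a%:R s) * (sQ (nxt a%:R s) + sQ' (nxt a%:R s))))).
    by move=> i _; apply: CovA_meas.
  move=> i; rewrite mem_index_iota => /andP[i1 _]; apply: IH.
  apply: good_nxt; last by split => //; split => //; apply/andP.
  by rewrite ler1n.
rewrite lee_fin /= -mulr_sumr.
case: L L1 IH => // m _ IH.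
have E : forall a : nat, sQ (nxt a%:R s) * (sQ (nxt a%:R s) + sQ' (nxt a%:R s)) =
   (a%:R * sQ s + sQ' s) * ((a%:R * sQ s + sQ' s) + sQ s) by [].
under eq_bigr do rewrite E.
rewrite (@tele (sQ s) (sQ' s) m) ?exprS; try lra.
set r := 1 - _.
have r0 : 0 <= r ^+ n by apply: exprn_ge0; rewrite /r subr_ge0 invf_le1 // ler1n.
rewrite [r * _]mulrC -!mulrA; apply: ler_wpM2l => //.
apply: ler_wpM2l => //.
rewrite /r.
have hm : 0 <= m%:R :> R by [].
rewrite -natr1.
have hQ : 0 < sQ s * (sQ s + sQ' s) by apply: mulr_gt0; lra.
have hQ2 : 0 < sQ s * ((m%:R + 1) * sQ s + sQ' s) by apply: mulr_gt0; nra.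
rewrite mulrBl mul1r lerD2l lerN2 -invfM lef_pV2 ?posrE //; last first.
  by apply: mulr_gt0; lra.
have : 0 <= sQ s * sQ' s * m%:R by apply: mulr_ge0 => //; apply: mulr_ge0; lra.
nra.
Qed.


Fixpoint CovB (X Y : R) (Nb : nat) (n : nat) (s : st R) : set R :=
  match n with
  | 0 => set0
  | k.+1 => if sQ s < X then
       Seg (sP s / sQ s) (rho s (2 * sQ s / Y)) `|`
       \big[setU/set0]_(a <- index_iota 1 Nb.+1) CovB X Y Nb k (nxt a%:R s)
     else set0
  end.

Lemma CovB_meas X Y Nb n s : measurable (CovB X Y Nb n s).
Proof.
elim: n s => [|n IH] s /=; first exact: measurable0.
case: ifPn => _ //; apply: measurableU; first exact: Seg_meas.
by apply: bigU_meas.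
Qed.

Lemma CovB_mu X Y Nb n s : 0 < X -> 0 < Y -> good s ->
  (mu (CovB X Y Nb n s) <=
   (if sQ s < X then 8 * X / Y / (sQ s * (sQ s + sQ' s)) else 0)%:E)%E.
Proof.
move=> X0 Y0; elim: n s => [|n IH] s [q1 [/andP[q'0 q'q] d]] /=.
  by rewrite measure0; case: ifPn => // _; rewrite lee_fin; apply: divr_ge0;
    [apply: divr_ge0; lra | apply: mulr_ge0; lra].
case: ifPn => QX; last by rewrite measure0.
apply: le_trans (muU2 _ _) _; first exact: Seg_meas.
  by apply: bigU_meas => i _; apply: CovB_meas.
have hsg : 0 <= 2 * sQ s / Y by apply: divr_ge0; lra.
rewrite Seg_mu; last by rewrite /rho divr_ge0 // mulr_ge0 //; nra.
set c := 8 * X / Y.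
apply: le_trans.
  apply: leeD; first exact: lexx.
  apply: (@mu_bigU _ _ (fun a : nat =>
     if sQ (nxt a%:R s) < X then c / (sQ (nxt a%:R s) * (sQ (nxt a%:R s) + sQ' (nxt a%:R s))) else 0)).
    by move=> i _; apply: CovB_meas.
  move=> i; rewrite mem_index_iota => /andP[i1 _]; apply: IH.
  apply: good_nxt; last by split => //; split => //; apply/andP.
  by rewrite ler1n.
rewrite -EFinD lee_fin.
have E : forall a : nat, (if sQ (nxt a%:R s) < X then c / (sQ (nxt a%:R s) * (sQ (nxt a%:R s) + sQ' (nxt a%:R s))) else 0) = c * (if a%:R * sQ s + sQ' s < X then ((a%:R * sQ s + sQ' s) * ((a%:R * sQ s + sQ' s) + sQ s))^-1 else 0).
  by move=> a /=; case: ifPn; rewrite ?mulr0.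
under eq_bigr do rewrite E.
rewrite -mulr_sumr.
have hT := @teleB (sQ s) (sQ' s) X Nb q1 (introT andP (conj q'0 q'q)) QX.
have hT' : \sum_(a <- index_iota 1 Nb.+1)
     (if a%:R * sQ s + sQ' s < X then ((a%:R * sQ s + sQ' s) * ((a%:R * sQ s + sQ' s) + sQ s))^-1 else 0)
  <= (sQ s * (sQ s + sQ' s))^-1 - (2 * X * sQ s)^-1.
  apply: le_trans hT _; rewrite lerD2l lerN2.
  have hm : 0 <= Nb%:R :> R by [].
  case: ifPn => // h; rewrite lef_pV2 ?posrE.
  all: try by apply: mulr_gt0; try apply: mulr_gt0; rewrite -?natr1; nra.
  rewrite -natr1; nra.
have c0 : 0 <= c by rewrite /c; apply: divr_ge0; lra.
apply: le_trans (lerD (lexx _) (ler_wpM2l c0 hT')) _.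
rewrite mulrBr /c.
have hQ : 0 < sQ s * (sQ s + sQ' s) by apply: mulr_gt0; lra.
have -> : 8 * X / Y * (2 * X * sQ s)^-1 = 4 / (Y * sQ s).
  by field; apply/and3P; split; apply/eqP; lra.
have : 2 * rho s (2 * sQ s / Y) <= 4 / (Y * sQ s).
  rewrite /rho; set D := sQ s * _.
  have hsq : 0 <= 2 * sQ s / Y * sQ' s by apply: mulr_ge0; lra.
  have hD : sQ s * sQ s <= D by rewrite /D; nra.
  have D0 : 0 < D by nra.
  have -> : 2 * (2 * sQ s / Y / D) = 4 / (Y * sQ s) * (sQ s * sQ s / D).
    by field; apply/and3P; split; apply/eqP; lra.
  apply: ler_piMr; first by apply: divr_ge0; [lra|apply: mulr_ge0; lra].
  by rewrite ler_pdivrMr // mul1r.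
rewrite mulrA; lra.
Qed.

End Meas.


Section Incl.
Variable R : realType.
Local Notation mu := (@lebesgue_measure R).
Implicit Types x : R.

Lemma t_range x k : irrational x -> 0 < (cf_rem x k.+1)^-1 < 1.
Proof.
move=> ix; have h := rem_gt1 _ x k ix.
by rewrite invr_gt0 invf_lt1 ?h ?andbT //; lra.
Qed.

Lemma cst_S_nat x k : irrational x -> exists a : nat,
  [/\ (1 <= a)%N, cf_digit x k.+1 = a%:R & cvst x k.+1 = nxt a%:R (cvst x k)].
Proof.
move=> ix; have [a ha] := digit_nat _ x k ix.
have := digit_ge1 _ x k ix; rewrite ha ler1n => a1.
by exists a; split => //=; rewrite ha.
Qed.

Lemma InclA x L n k : irrational x -> 0 < x < 1 ->
  (forall i, (k < i <= k + n)%N -> cf_digit x i < L%:R) ->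
  CovA L n (cvst x k) x.
Proof.
move=> ix x01; elim: n k => [|n IH] k hd /=.
  have /andP[t0 t1] := t_range k ix.
  apply: Seg_in; rewrite {1}(cst_repr k ix x01); apply: hm_close.
    exact: cst_good.
  by rewrite ltW //= ltW.
have [a [a1 ha hc]] := cst_S_nat k ix.
apply: (@in_bigU _ _ _ a).
  rewrite mem_index_iota a1 /= -(ltr_nat R) -ha; apply: hd.
  by rewrite leqnn addnS ltnS leq_addr.
rewrite -hc; apply: IH => i /andP[h1 h2]; apply: hd.
by rewrite (ltn_trans _ h1) //= -addSnnS.
Qed.

Lemma InclB x (X Y : R) Nb j m k : irrational x -> 0 < x < 1 ->
  sQ (cvst x j) < X -> Y < sQ (cvst x j.+1) -> 2 * X <= Y -> X <= Nb%:R ->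
  (k <= j < k + m)%N -> CovB X Y Nb m (cvst x k) x.
Proof.
move=> ix x01 hX hY hXY hN; elim: m k => [|m IH] k /=.
  by rewrite addn0 => /andP[h1 h2]; move: (leq_ltn_trans h1 h2); rewrite ltnn.
move=> /andP[kj jkm].
have QX : sQ (cvst x k) < X by apply: le_lt_trans (cst_mono_le ix kj) hX.
rewrite QX.
have [q1 [/andP[q'0 q'q] _]] := cst_good k ix.
case: (ltnP k j) => kj'.
  right.
  have [a [a1 ha hc]] := cst_S_nat k ix.
  apply: (@in_bigU _ _ _ a).
    rewrite mem_index_iota a1 /= ltnS -(ler_nat R) -ha.
    have := cst_ge_digit k ix.
    have hj : sQ (cvst x k.+1) <= sQ (cvst x j) by apply: cst_mono_le.
    have := digit_ge1 _ x k ix.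
    move=> ? ?; nra.
  by rewrite -hc; apply: IH; rewrite kj' /= addSnnS.
have ekj : k = j by apply/eqP; rewrite eqn_leq kj kj'.
subst j.
left.
have /andP[t0 t1] := t_range k ix.
apply: Seg_in; rewrite {1}(cst_repr k ix x01); apply: hm_close.
  exact: cst_good.
rewrite ltW //=.
set u := (cf_rem x k.+1)^-1.
have hr := rem_gt1 _ x k ix.
have uE : u * cf_rem x k.+1 = 1 by rewrite mulVf //; apply/eqP; lra.
have hd := digit_le _ x k.+1.
have hd1 := digit_ge1 _ x k ix.
have hQ1 : sQ (cvst x k.+1) = cf_digit x k.+1 * sQ (cvst x k) + sQ' (cvst x k) by [].
have Y0 : 0 < Y by nra.
rewrite ler_pdivlMr //.
have h1 : Y < 2 * (cf_digit x k.+1 * sQ (cvst x k)) by nra.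
have h2 : u * (cf_digit x k.+1 * sQ (cvst x k)) <= u * (cf_rem x k.+1 * sQ (cvst x k)).
  by apply: ler_wpM2l; [exact: ltW t0|apply: ler_wpM2r => //; lra].
nra.
Qed.

Lemma null_small (A : set R) : (forall e : R, 0 < e -> (mu A <= e%:E)%E) -> mu A = 0%E.
Proof.
move=> h; have h1 := h 1 ltr01.
have h0 : (0 <= mu A)%E by apply: measure_ge0.
move: h0 h1; case: (mu A) h => [v| |] h //= h0 h1.
congr (_%:E); apply/eqP; rewrite eq_le.
rewrite lee_fin in h0; rewrite h0 andbT.
rewrite leNgt; apply/negP => v0.
have h2 : v / 2 > 0 by lra.
have := h _ h2; rewrite lee_fin; lra.
Qed.

Lemma geom_bound (r : R) n : 0 <= r <= 1 -> r ^+ n * (1 + n%:R * (1 - r)) <= 1.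
Proof.
move=> /andP[r0 r1]; elim: n => [|n IH]; first by rewrite expr0 mul1r mul0r addr0.
rewrite exprS -natr1.
have hrn : 0 <= r ^+ n by apply: exprn_ge0.
have hrn1 : r ^+ n <= 1 by apply: exprn_ile1.
have : r * (r ^+ n * (1 + n%:R * (1 - r))) <= r by apply: ler_piMr.
have : r * r ^+ n * (1 - r) <= 1 - r.
  rewrite -[leRHS]mul1r; apply: ler_wpM2r; first lra.
  by rewrite -exprS exprn_ile1.
nra.
Qed.

End Incl.


Section Null.
Variable R : realType.
Local Notation mu := (@lebesgue_measure R).
Implicit Types x : R.

Lemma nat_above (v : R) : exists n : nat, v < n%:R.
Proof.
case: (lerP 0 v) => hv; last by exists 0%N.
by exists (Num.Def.archi_bound v); apply: archi_boundP.
Qed.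

Lemma nullA (L : nat) : mu (\bigcap_n CovA L.+1 n (st0 R)) = 0%E.
Proof.
apply: null_small => e e0.
have [n hn] := nat_above (2 * L.+1%:R / e).
apply: (@le_trans _ _ (mu (CovA L.+1 n (st0 R)))).
  rewrite le_measure ?inE //; first by apply: bigcapT_measurable => k; exact: CovA_meas.
    exact: CovA_meas.
  by move=> y hy; apply: hy.
apply: le_trans (CovA_mu n (ltn0Sn L) (@good0 R)) _.
rewrite lee_fin /= addr0 mul1r divr1.
set r := 1 - _.
have hL : 0 < L.+1%:R :> R by [].
have r01 : 0 <= r <= 1.
  rewrite /r subr_ge0 invf_le1 ?ler1n // gerBl invr_ge0; by apply/andP; split => //; apply: ltW.
have := geom_bound n r01.
have -> : 1 - r = L.+1%:R^-1 by rewrite /r; ring.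
have hrn : 0 <= r ^+ n by case/andP: r01 => ? _; apply: exprn_ge0.
move: hn; rewrite ltr_pdivrMr // => hn.
have hn0 : 0 <= n%:R :> R by [].
set w := L.+1%:R^-1.
have hw : w * L.+1%:R = 1 by rewrite /w mulVf //; apply/eqP; lra.
have hw0 : 0 < w by rewrite /w invr_gt0.
move=> hg.
(* 2 r^n <= e : from r^n (1 + n w) <= 1 and 2 L < n e *)
have h1 : 2 * (w * L.+1%:R) < n%:R * e * w by nra.
rewrite hw in h1.
have h2 : r ^+ n * 2 <= r ^+ n * (n%:R * e * w) by apply: ler_wpM2l => //; lra.
have h3 : r ^+ n * (n%:R * w) <= 1.
  have : 0 <= r ^+ n by [].
  move: hg; rewrite mulrDr mulr1; nra.
have h4 : e * (r ^+ n * (n%:R * w)) <= e * 1 by apply: ler_wpM2l => //; lra.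
have E : r ^+ n * (n%:R * e * w) = e * (r ^+ n * (n%:R * w)) by ring.
lra.
Qed.

Lemma nullB (X Y : nat -> R) (Nb : nat -> nat) i0 :
  (forall i, 0 < X i) -> (forall i, 0 < Y i) -> (forall i, 8 * X i / Y i <= i.+1%:R^-1) ->
  mu (\bigcap_i CovB (X (i + i0)%N) (Y (i + i0)%N) (Nb (i + i0)%N) (Nb (i + i0)%N).+1 (st0 R))
  = 0%E.
Proof.
move=> X0 Y0 hXY; apply: null_small => e e0.
have [n hn] := nat_above e^-1.
set k := (n + i0)%N.
apply: (@le_trans _ _ (mu (CovB (X k) (Y k) (Nb k) (Nb k).+1 (st0 R)))).
  rewrite le_measure ?inE //; first by apply: bigcapT_measurable => k'; exact: CovB_meas.
    exact: CovB_meas.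
  by move=> y hy; apply: hy.
apply: le_trans (CovB_mu (Nb k) (Nb k).+1 (X0 k) (Y0 k) (@good0 R)) _.
rewrite /= addr0 mul1r divr1 lee_fin.
have h8 : 0 <= 8 * X k / Y k by apply: divr_ge0; [have := X0 k; lra|exact: ltW].
case: ifPn => _; last exact: ltW.
apply: le_trans (hXY k) _.
rewrite invf_ple ?posrE //.
apply: le_trans (ltW hn) _; rewrite ler_nat /k; apply: leqW; exact: leq_addr.
Qed.

Lemma badB x (X Y : R) Nb : irrational x -> 0 < x < 1 ->
  1 <= X -> 2 * X <= Y -> X <= Nb%:R ->
  ~ CovB X Y Nb Nb.+1 (st0 R) x ->
  exists r, X <= sQ (cvst x r) <= Y.
Proof.
move=> ix x01 X1 XY XN hn; apply: contrapT => hno.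
have hex : exists n, X <= sQ (cvst x n).
  have [n hn'] := nat_above X; exists n; apply: ltW; apply: lt_le_trans hn' _.
  exact: cst_geq.
case: (ex_minnP hex) => r0 h0 hmin.
case: r0 h0 hmin => [|j] h0 hmin.
  apply: hno; exists 0%N; rewrite h0 /=; lra.
have hj : sQ (cvst x j) < X.
  rewrite ltNge; apply/negP => h; have := hmin j h; rewrite ltnn //.
have hj1 : Y < sQ (cvst x j.+1).
  rewrite ltNge; apply/negP => h; apply: hno; exists j.+1; by rewrite h0 h.
apply: hn; apply: (@InclB _ x X Y Nb j Nb.+1 0%N) => //.
rewrite leq0n /= add0n ltnS -(ler_nat R).
have := cst_geq j ix; lra.
Qed.

End Null.


Section Final.
Variable R : realType.
Local Notation mu := (@lebesgue_measure R).
Implicit Types x : R.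

Lemma gap_ge (q q' : nat -> R) k s (T : R) : (forall r, 1 <= q r) -> (1 <= k)%N ->
  between_idx q q' k s -> T <= Num.min (q k / q' s) (q' s.+1 / q k) ->
  T <= gap_ratio q q' s.
Proof.
rewrite /between_idx /gap_ratio => q1 k1 [s1 /andP[h1 h2]] hT; apply: le_trans hT _.
set E := (X in sup X).
have hub : has_ubound E.
  exists (q' s.+1) => y [r [r1 /andP[_ hr]] <-].
  have qr := q1 r.
  have hq' : 0 <= q' s.+1 by have := q1 k; lra.
  rewrite ge_min; apply/orP; right; rewrite ler_pdivrMr; last by lra.
  by rewrite -[X in X <= _]mulr1; apply: ler_wpM2l.
apply: (ub_le_sup hub); exists k => //; split => //; apply/andP; split => //.
Qed.

Lemma cvg_from_nat (f : nat -> R) : (forall j, j%:R <= f j) -> f @ \oo --> +oo.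
Proof.
move=> h; apply/cvgryPge => A; near=> j; apply: le_trans (h j); near: j.
exact: nbhs_infty_ger.
Unshelve. all: by end_near.
Qed.


Lemma q_ge1 x r : irrational x -> 1 <= cf_q x r.
Proof. by move=> ix; rewrite cst_q; have [] := cst_good r ix. Qed.

Lemma caseA_T alpha beta (K : R) (T : nat) :
  irrational alpha -> (forall n, cf_digit alpha n.+1 <= K) ->
  irrational beta -> (forall v : R, exists i, v <= cf_digit beta i.+1) ->
  exists k s, (1 <= k)%N /\ between_idx (cf_q alpha) (cf_q beta) k s /\
     T%:R <= gap_ratio (cf_q alpha) (cf_q beta) s.
Proof.
move=> ia hK ib hub.
have K0 : 0 <= K by have := hK 0%N; have := digit_ge1 _ alpha 0 ia; lra.
set Tr : R := T.+2%:R.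
have Tr2 : 2 <= Tr by rewrite /Tr ler_nat.
have [i hi] := hub ((K + 1) * Tr ^+ 2 + cf_digit beta 1 + 1).
have i1 : (1 <= i)%N.
  case: i hi => // hi.
  have : 0 <= (K + 1) * Tr ^+ 2 by apply: mulr_ge0; [lra|apply: exprn_ge0; lra].
  lra.
set A := sQ (cvst beta i).
have A1 : 1 <= A by have [] := cst_good i ib.
set B := sQ (cvst beta i.+1).
have hB : cf_digit beta i.+1 * A <= B by apply: cst_ge_digit.
have hex : exists k, A * Tr < sQ (cvst alpha k).
  have [n hn] := nat_above (A * Tr); exists n; apply: lt_le_trans hn _.
  exact: cst_geq.
case: (ex_minnP hex) => k0 h0 hmin.
case: k0 h0 hmin => [|k] h0 hmin.
  by move: h0 => /=; nra.
have hk : sQ (cvst alpha k) <= A * Tr.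
  rewrite leNgt; apply/negP => h; have := hmin k h; rewrite ltnn //.
have hk1 : sQ (cvst alpha k.+1) <= (K + 1) * (A * Tr).
  apply: le_trans (cst_le_ratio ia (hK k)) _; apply: ler_wpM2l => //; lra.
have hTT : (K + 1) * Tr ^+ 2 * A <= cf_digit beta i.+1 * A.
  have hd1 := digit_ge1 _ beta 0 ib.
  apply: ler_wpM2r; lra.
have KA : 0 < (K + 1) * (A * Tr) by apply: mulr_gt0; [lra|apply: mulr_gt0; lra].
have hqk : 0 < sQ (cvst alpha k.+1) by have [] := cst_good k.+1 ia; lra.
have hbet : between_idx (cf_q alpha) (cf_q beta) k.+1 i.
  rewrite /between_idx !cst_q -/A -/B; split => //; apply/andP; split.
    by apply: le_lt_trans h0; rewrite -[X in X <= _]mulr1; apply: ler_wpM2l; lra.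
  apply: le_lt_trans hk1 _; apply: lt_le_trans hB.
  apply: lt_le_trans hTT; rewrite expr2.
  have : 0 < (K + 1) * (A * Tr) * (Tr - 1) by apply: mulr_gt0; lra.
  nra.
exists k.+1, i; split => //; split => //.
apply: (@gap_ge _ _ k.+1) => //; first by move=> r; apply: q_ge1.
rewrite !cst_q -/A -/B.
have hT : T%:R <= Tr by rewrite /Tr ler_nat; apply: leqW; apply: leqW.
rewrite le_min; apply/andP; split.
  rewrite ler_pdivlMr; last by lra.
  apply: le_trans (ltW h0); rewrite mulrC; apply: ler_wpM2l; lra.
rewrite ler_pdivlMr //.
apply: le_trans hB; apply: le_trans hTT.
apply: le_trans (_ : T%:R * ((K + 1) * (A * Tr)) <= _).
  by apply: ler_wpM2l => //; lra.
rewrite expr2.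
have : 0 <= (K + 1) * A * Tr * (Tr - T%:R) by apply: mulr_ge0; [apply: mulr_ge0; [apply: mulr_ge0|]|]; lra.
nra.
Qed.


Lemma caseB_m alpha (i : nat) : irrational alpha ->
  (forall v : R, exists n, v <= cf_digit alpha n.+1) ->
  exists m, (1 <= m)%N /\ 8 * i.+2%:R ^+ 2 * i.+1%:R <= cf_digit alpha m.+1.
Proof.
move=> ia hub.
have [n hn] := hub (8 * i.+2%:R ^+ 2 * i.+1%:R + cf_digit alpha 1 + 1).
have h0 : 0 <= 8 * i.+2%:R ^+ 2 * i.+1%:R :> R.
  by apply: mulr_ge0; [apply: mulr_ge0; [lra|apply: exprn_ge0]|].
case: n hn => [|m] hm; first by lra.
exists m.+1; split => //.
have := digit_ge1 _ alpha 0 ia; lra.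
Qed.

Lemma XY_facts (T c Q Q1 d : R) : 2 <= T -> 1 <= c -> 1 <= Q -> d * Q <= Q1 ->
  8 * T ^+ 2 * c <= d ->
  [/\ 1 <= T * Q, 2 * (T * Q) <= Q1 / T & 8 * (T * Q) / (Q1 / T) <= c^-1].
Proof.
move=> T2 c1 Q1' hQ hd.
have hT2 : 4 <= T ^+ 2 by rewrite expr2; nra.
have hd0 : 32 <= d by nra.
have hQ1 : 32 <= Q1 by nra.
have hdQ : 8 * T ^+ 2 * c * Q <= Q1 by apply: le_trans _ hQ; apply: ler_wpM2r; lra.
split.
- nra.
- rewrite ler_pdivlMr; last by lra.
  have : 2 * T ^+ 2 * Q <= 8 * T ^+ 2 * c * Q.
    apply: ler_wpM2r; first lra.
    have : 0 <= T ^+ 2 by lra.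
    nra.
  rewrite expr2; nra.
- have -> : 8 * (T * Q) / (Q1 / T) = 8 * T ^+ 2 * Q / Q1.
    by rewrite expr2; field; apply/andP; split; apply/eqP; lra.
  rewrite ler_pdivrMr; last by lra.
  rewrite ler_pdivlMl; last by lra.
  by rewrite mulrA; nra.
Qed.

End Final.


Definition concl (R : realType) (alpha beta : R) : Prop :=
      let q := cf_q alpha in
      let q' := cf_q beta in
      exists n : nat -> nat, (forall j, (1 <= n j)%N) /\
        ((exists sigma : nat -> nat,
            (forall j, between_idx q q' (n j) (sigma j)) /\
            (fun j => gap_ratio q q' (sigma j)) @ \oo --> +oo)
         \/
         (exists eta : nat -> nat,
            (forall j, between_idx q' q (n j) (eta j)) /\
            (fun j => gap_ratio q' q (eta j)) @ \oo --> +oo)).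

Lemma irr01 (R : realType) (x : R) : irrational x -> 0 <= x <= 1 -> 0 < x < 1.
Proof.
move=> ix /andP[h0 h1]; rewrite !lt_neqAle h0 h1 !andbT; apply/andP; split.
  by rewrite eq_sym; apply: irrN0.
by apply/eqP => e; apply: ix; exists 1 => //; rewrite rmorph1.
Qed.

Lemma concl_A (R : realType) (alpha : R) (K : R) :
  irrational alpha -> (forall n, cf_digit alpha n.+1 <= K) ->
  exists Zc : set R, (@lebesgue_measure R).-negligible Zc /\
    forall beta, 0 < beta < 1 -> irrational beta -> ~ Zc beta -> concl alpha beta.
Proof.
move=> ia hK.
exists (\bigcup_L \bigcap_n CovA L.+1 n (st0 R)); split.
  apply: negligible_bigcup => L; exists (\bigcap_n CovA L.+1 n (st0 R)); split => //.
    by apply: bigcapT_measurable => n; apply: CovA_meas.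
  exact: nullA.
move=> beta b01 ib nZ.
have hub : forall v : R, exists i, v <= cf_digit beta i.+1.
  move=> v; apply: contrapT => hno; apply: nZ.
  have [L hL] := nat_above v.
  exists L => // n _.
  apply: (@InclA _ beta L.+1 n 0%N) => // i /andP[i0 _].
  case: i i0 => // i _.
  have : ~ v <= cf_digit beta i.+1 by move=> h; apply: hno; exists i.
  move/negP; rewrite -ltNge => h; apply: lt_trans h _.
  by apply: lt_trans hL _; rewrite ltr_nat.
have hch : forall j : nat, exists p : nat * nat, (1 <= p.1)%N /\
    between_idx (cf_q alpha) (cf_q beta) p.1 p.2 /\
    j%:R <= gap_ratio (cf_q alpha) (cf_q beta) p.2.
  move=> j; have [k [s [h1 [h2 h3]]]] := caseA_T j ia hK ib hub.
  by exists (k, s).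
have [f hf] := choice hch.
exists (fun j => (f j).1); split; first by move=> j; case: (hf j).
left; exists (fun j => (f j).2); split; first by move=> j; case: (hf j) => _ [].
by apply: cvg_from_nat => j; case: (hf j) => _ [].
Qed.

Lemma concl_B (R : realType) (alpha : R) :
  irrational alpha -> (forall v : R, exists n, v <= cf_digit alpha n.+1) ->
  exists Zc : set R, (@lebesgue_measure R).-negligible Zc /\
    forall beta, 0 < beta < 1 -> irrational beta -> ~ Zc beta -> concl alpha beta.
Proof.
move=> ia hub.
have [m hm] := choice (fun i => caseB_m i ia hub).
pose T (i : nat) : R := i.+2%:R.
pose X i := T i * sQ (cvst alpha (m i)).
pose Y i := sQ (cvst alpha (m i).+1) / T i.
have hF : forall i, [/\ 1 <= X i, 2 * X i <= Y i & 8 * X i / Y i <= i.+1%:R^-1].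
  move=> i; rewrite /X /Y; apply: (@XY_facts _ _ _ _ _ (cf_digit alpha (m i).+1)).
  - by rewrite /T ler_nat.
  - by rewrite ler1n.
  - by have [] := cst_good (m i) ia.
  - exact: cst_ge_digit.
  - by case: (hm i).
have [Nb hNb] := choice (fun i => nat_above (X i)).
exists (\bigcup_i0 \bigcap_i CovB (X (i + i0)%N) (Y (i + i0)%N) (Nb (i + i0)%N) (Nb (i + i0)%N).+1 (st0 R)).
split.
  apply: negligible_bigcup => i0; eexists; split; last exact: subset_refl.
    by apply: bigcapT_measurable => n; apply: CovB_meas.
  apply: nullB.
  - by move=> i; case: (hF i) => ? _ _; lra.
  - by move=> i; case: (hF i) => ? ? _; lra.
  - by move=> i; case: (hF i).
move=> beta b01 ib nZ.
have hch : forall j : nat, exists p : nat * nat, (1 <= p.1)%N /\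
    between_idx (cf_q beta) (cf_q alpha) p.1 p.2 /\
    j%:R <= gap_ratio (cf_q beta) (cf_q alpha) p.2.
  move=> j.
  have [i hi] : exists i, ~ CovB (X (i + j)%N) (Y (i + j)%N) (Nb (i + j)%N) (Nb (i + j)%N).+1 (st0 R) beta.
    apply: contrapT => hno; apply: nZ; exists j => // i _.
    by apply: contrapT => h; apply: hno; exists i.
  set k := (i + j)%N in hi.
  have [X1 XY _] := hF k.
  have [r /andP[hr1 hr2]] := badB ib b01 X1 XY (ltW (hNb k)) hi.
  have [mk1 hmk] := hm k.
  have Q1 : 1 <= sQ (cvst alpha (m k)) by have [] := cst_good (m k) ia.
  have Tk : 2 <= T k by rewrite /T ler_nat.
  have Tj : j%:R <= T k by rewrite /T ler_nat /k; apply: leqW; apply: leqW; apply: leq_addl.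
  have hQ1 : 0 < sQ (cvst alpha (m k).+1).
    by have [] := cst_good (m k).+1 ia; lra.
  have hbet : between_idx (cf_q beta) (cf_q alpha) r (m k).
    rewrite /between_idx !cst_q; split => //; apply/andP; split.
      apply: lt_le_trans hr1; rewrite /X; nra.
    apply: le_lt_trans hr2 _; rewrite /Y ltr_pdivrMr; last by lra.
    nra.
  have r1 : (1 <= r)%N.
    case: r hr1 {hr2 hbet} => // /=; rewrite /X => h; nra.
  exists (r, m k); split => //; split => //.
  apply: (@gap_ge _ _ _ r) => //; first by move=> r'; apply: q_ge1.
  rewrite /= !cst_q le_min; apply/andP; split.
    have Qa : 0 < sQ (cvst alpha (m k)) by lra.
    rewrite ler_pdivlMr //; apply: le_trans hr1; rewrite /X; nra.
  have Qr : 0 < sQ (cvst beta r) by have [] := cst_good r ib; lra.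
  rewrite ler_pdivlMr //; apply: le_trans (_ : T k * sQ (cvst beta r) <= _).
    by apply: ler_wpM2r; lra.
  by move: hr2; rewrite /Y ler_pdivlMr; [rewrite mulrC|lra].
have [f hf] := choice hch.
exists (fun j => (f j).1); split; first by move=> j; case: (hf j).
right; exists (fun j => (f j).2); split; first by move=> j; case: (hf j) => _ [].
by apply: cvg_from_nat => j; case: (hf j) => _ [].
Qed.

Lemma muD (R : realType) (A B : set R) : measurable A -> measurable B ->
  (@lebesgue_measure R A < +oo)%E ->
  @lebesgue_measure R (A `\` B) = (@lebesgue_measure R A - @lebesgue_measure R (A `&` B))%E.
Proof. exact: (measureD (mu := @lebesgue_measure R)). Qed.

Unset Implicit Arguments.

Theorem theorem8p1 (R : realType) (alpha : R) :
  0 <= alpha <= 1 -> alpha \in (@irrational R) ->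
  exists S : set R,
    [/\ measurable S, S `<=` `[0, 1]%classic &
        (@lebesgue_measure R S = 1%:E)%E] /\
    forall beta, S beta ->
      let q := cf_q alpha in
      let q' := cf_q beta in
      exists n : nat -> nat, (forall j, (1 <= n j)%N) /\
        ((exists sigma : nat -> nat,
            (forall j, between_idx q q' (n j) (sigma j)) /\
            (fun j => gap_ratio q q' (sigma j)) @ \oo --> +oo)
         \/
         (exists eta : nat -> nat,
            (forall j, between_idx q' q (n j) (eta j)) /\
            (fun j => gap_ratio q' q (eta j)) @ \oo --> +oo)).
Proof.
move=> a01; rewrite inE => ia.
have [Zc [nZ hP]] : exists Zc : set R, (@lebesgue_measure R).-negligible Zc /\
    forall beta, 0 < beta < 1 -> irrational beta -> ~ Zc beta -> concl alpha beta.
  case: (pselect (exists K : R, forall n, cf_digit alpha n.+1 <= K)) => [[K hK]|hnK].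
    exact: (concl_A ia hK).
  apply: (concl_B ia) => v; apply: contrapT => hno; apply: hnK; exists v => n.
  by rewrite leNgt; apply/negP => h; apply: hno; exists n; apply: ltW.
have nrat : (@lebesgue_measure R).-negligible (@rational R).
  exists (@rational R); split => //; last by rewrite -lebesgue_measure_rat.
  rewrite /rational (_ : ratr @` setT = \bigcup_(q : rat) [set (ratr q : R)]).
    by apply: bigcupT_measurable_rat => q; apply: measurable_set1.
  by apply/seteqP; split => [y [q _ <-]|y [q _ ->]]; [exists q|exists q].
have [A [mA A0 hA]] := negligibleU nrat nZ.
exists (`[0, 1]%classic `\` A); split; first split.
- by apply: measurableD => //; apply: measurable_itv.
- by move=> y [].
- rewrite muD //; last by rewrite lebesgue_measure_itv /= lte_fin ltr01 ltry.
    rewrite lebesgue_measure_itv /= lte_fin ltr01 oppr0 adde0.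
    have -> : lebesgue_measure (`[0, 1]%classic `&` A) = 0%E.
      apply/eqP; rewrite eq_le measure_ge0 andbT -A0.
      by rewrite le_measure ?inE //; apply: measurableI => //; apply: measurable_itv.
    by rewrite oppe0 adde0.
move=> beta [hb nA].
have ib : irrational beta by move=> hr; apply: nA; apply: hA; left.
have b01 : 0 < beta < 1 by apply: irr01 => //; move: hb; rewrite /= in_itv.
exact: (hP beta b01 ib (fun h => nA (hA _ (or_intror h)))).
Qed.
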